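(* Let $d_1,\dots,d_n$ be positive integers with $d=\sum_id_i\ge2$, and let $(p_1,p_2)$ be either $(s,0)$ with $s\in[0,1]$ or $(1,s)$ with $s\in(0,1]$. Then the unique pair $(\lambda,y)\in\mathbb{R}\times C^2([0,1];\mathbb{R}^n)$ satisfying $$p_1\sum_{i=1}^nd_i\Big(-y_i'\sum_{k=1}^nd_ky_k'+y_i'^2\Big)\Big|_{r=0}=(d-1)\lambda,$$ $$-p_2\,y_i'\sum_{k=1}^nd_ky_k'-y_i''=p_2\lambda\ \text{ on }[0,1]\ (i=1,\dots,n),\qquad y(0)=0,\quad y(1)=0,$$ is $(\lambda,y)=(0,0)$.
   Context: This is the system obtained, for parameters $t\in[0,1/2]$, from a homotopy with $p_1(t)=\min(\max(4t,0),1)$, $p_2(t)=\min(\max(4t-1,0),1)$, $p_3=p_4=0$; the pairs $(p_1(t),p_2(t))$ for $t\in[0,1/2]$ are exactly those listed. *)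

(* Defs.v *)
From Stdlib Require Import Reals Lra List.
From Coquelicot Require Import Coquelicot.
Open Scope R_scope.

Definition sumR (n : nat) (f : nat -> R) : R :=
  fold_right Rplus 0 (map f (seq 0 n)).

Definition sumN (n : nat) (f : nat -> nat) : nat :=
  fold_right Nat.add 0%nat (map f (seq 0 n)).

Definition I01 (t : R) : Prop := 0 <= t <= 1.

Definition deriv_on01 (f f' : R -> R) : Prop :=
  forall x, I01 x ->
    filterlim (fun t => (f t - f x) / (t - x))
      (within (fun t => I01 t /\ t <> x) (locally x)) (locally (f' x)).

Definition cont_on01 (f : R -> R) : Prop :=
  forall x, I01 x -> filterlim f (within I01 (locally x)) (locally (f x)).

Definition C2_01 (f f1 f2 : R -> R) : Prop :=
  deriv_on01 f f1 /\ deriv_on01 f1 f2 /\ cont_on01 f2.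

Definition is_solution (n : nat) (d : nat -> nat) (p1 p2 lam : R)
    (y : nat -> R -> R) : Prop :=
  exists y1 y2 : nat -> R -> R,
    (forall i, (i < n)%nat -> C2_01 (y i) (y1 i) (y2 i)) /\
    p1 * sumR n (fun i => INR (d i) *
          (- y1 i 0 * sumR n (fun k => INR (d k) * y1 k 0) + (y1 i 0) ^ 2))
      = (INR (sumN n d) - 1) * lam /\
    (forall i r, (i < n)%nat -> I01 r ->
       - p2 * y1 i r * sumR n (fun k => INR (d k) * y1 k r) - y2 i r = p2 * lam) /\
    (forall i, (i < n)%nat -> y i 0 = 0 /\ y i 1 = 0).

(* Main.v *)
Require Import Defs.
From Stdlib Require Import Reals Lra Lia List.
From Coquelicot Require Import Coquelicot.
Open Scope R_scope.


Lemma ballR x e y : ball x e y <-> Rabs (y - x) < e.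
Proof. unfold ball; simpl; unfold AbsRing_ball, abs, minus, plus, opp; simpl. tauto. Qed.

Definition clamp (t : R) := Rmax 0 (Rmin 1 t).
Definition ext (f : R -> R) t := f (clamp t).

Lemma clamp_I01 t : I01 (clamp t).
Proof. unfold clamp, I01, Rmax, Rmin; repeat destruct Rle_dec; lra. Qed.
Lemma clamp_id t : I01 t -> clamp t = t.
Proof. unfold clamp, I01, Rmax, Rmin; intros; repeat destruct Rle_dec; lra. Qed.
Lemma clamp_lip t u : Rabs (clamp t - clamp u) <= Rabs (t - u).
Proof. unfold clamp, Rmax, Rmin; repeat destruct Rle_dec; unfold Rabs; repeat destruct Rcase_abs; lra. Qed.

Lemma deriv_ed f f' : deriv_on01 f f' -> forall x, I01 x -> forall eps, 0 < eps ->
  exists delta, 0 < delta /\ forall t, I01 t -> t <> x -> Rabs (t - x) < delta ->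
    Rabs ((f t - f x) / (t - x) - f' x) < eps.
Proof.
  intros H x Hx eps He.
  destruct (proj1 (filterlim_locally _ _) (H x Hx) (mkposreal eps He)) as [del Hdel].
  exists del; split; [apply cond_pos|].
  intros t Ht Htx Hd. apply ballR. apply Hdel; [apply ballR; exact Hd| tauto].
Qed.

Lemma ext_cont f f' : deriv_on01 f f' -> forall x, continuous (ext f) x.
Proof.
  intros H x. apply filterlim_locally. intros eps.
  set (c := clamp x).
  destruct (deriv_ed f f' H c (clamp_I01 x) 1 Rlt_0_1) as [d1 [Hd1 Hq]].
  set (M := Rabs (f' c) + 1).
  assert (HM : 0 < M) by (unfold M; pose proof (Rabs_pos (f' c)); lra).
  assert (Hem : 0 < eps / M) by (apply Rdiv_lt_0_compat; [apply cond_pos|exact HM]).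
  exists (mkposreal (Rmin d1 (eps / M)) (Rmin_pos _ _ Hd1 Hem)).
  intros t Ht0. pose proof (proj1 (ballR _ _ _) Ht0) as Ht. simpl in Ht. apply ballR. unfold ext. fold c.
  pose proof (clamp_lip t x) as Hl. fold c in Hl.
  set (ct := clamp t) in *.
  pose proof (Rmin_l d1 (eps/M)). pose proof (Rmin_r d1 (eps/M)).
  destruct (Req_dec ct c) as [E|E].
  - rewrite E. replace (f c - f c) with 0 by ring. rewrite Rabs_R0. apply cond_pos.
  - assert (Hq' := Hq ct (clamp_I01 t) E ltac:(lra)).
    set (q := (f ct - f c) / (ct - c)) in *.
    assert (Hfe : f ct - f c = q * (ct - c)) by (unfold q; field; lra).
    rewrite Hfe, Rabs_mult.
    assert (Rabs q < M).
    { unfold M. pose proof (Rabs_triang_inv q (f' c)). lra. }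
    assert (Rabs (ct - c) < eps / M) by lra.
    assert (M * (eps / M) = eps) by (field; lra).
    pose proof (Rabs_pos q). pose proof (Rabs_pos (ct - c)). nra.
Qed.

Lemma ext_deriv f f' : deriv_on01 f f' -> forall x, 0 < x < 1 -> is_derive (ext f) x (f' x).
Proof.
  intros H x Hx. apply is_derive_Reals. intros eps He.
  destruct (deriv_ed f f' H x ltac:(unfold I01; lra) eps He) as [d1 [Hd1 Hq]].
  assert (Hp : 0 < Rmin d1 (Rmin x (1 - x))) by (repeat apply Rmin_pos; lra).
  exists (mkposreal _ Hp). intros h Hh Hhd. simpl in Hhd.
  pose proof (Rmin_l d1 (Rmin x (1-x))). pose proof (Rmin_r d1 (Rmin x (1-x))).
  pose proof (Rmin_l x (1-x)). pose proof (Rmin_r x (1-x)).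
  assert (Habs := Rabs_def2 h (Rmin x (1-x)) ltac:(lra)).
  unfold ext. rewrite !clamp_id by (unfold I01; lra).
  assert (Hq' := Hq (x + h) ltac:(unfold I01; lra) ltac:(lra)
                    ltac:(replace (x + h - x) with h by ring; lra)).
  replace (x + h - x) with h in Hq' by ring. exact Hq'.
Qed.

Lemma const01 G : (forall x, continuous G x) -> (forall x, 0 < x < 1 -> is_derive G x 0) ->
  forall x, I01 x -> G x = G 0.
Proof.
  intros Hc Hd x Hx. destruct (Req_dec x 0) as [E|E]; [subst; reflexivity|].
  assert (H := MVT_gen G 0 x (fun _ => 0)). simpl in H.
  unfold I01 in Hx.
  rewrite Rmin_left, Rmax_right in H by lra.
  destruct H as [c [_ Hc']].
  - intros t Ht. apply Hd. lra.
  - intros t _. apply continuity_pt_filterlim. apply Hc.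
  - lra.
Qed.

Lemma mvt01 G G' : (forall x, continuous G x) -> (forall x, 0 < x < 1 -> is_derive G x (G' x)) ->
  exists c, I01 c /\ G 1 - G 0 = G' c.
Proof.
  intros Hc Hd.
  assert (H := MVT_gen G 0 1 G'). simpl in H.
  rewrite Rmin_left, Rmax_right in H by lra.
  destruct H as [c [Hc1 Hc']].
  - intros t Ht. apply Hd. lra.
  - intros t _. apply continuity_pt_filterlim. apply Hc.
  - exists c. split; [exact Hc1|]. rewrite Hc'. ring.
Qed.

Lemma D_eq (f : R -> R) (x l l' : R) : is_derive f x l -> l = l' -> is_derive f x l'.
Proof. intros; subst; auto. Qed.
Lemma D_mult (f g : R -> R) (x df dg : R) : is_derive f x df -> is_derive g x dg ->
  is_derive (fun t => f t * g t) x (df * g x + f x * dg).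
Proof. intros; apply (is_derive_mult f g x df dg); auto. intros; apply Rmult_comm. Qed.
Lemma D_plus (f g : R -> R) (x df dg : R) : is_derive f x df -> is_derive g x dg ->
  is_derive (fun t => f t + g t) x (df + dg).
Proof. intros; apply (is_derive_plus f g x df dg); auto. Qed.
Lemma D_minus (f g : R -> R) (x df dg : R) : is_derive f x df -> is_derive g x dg ->
  is_derive (fun t => f t - g t) x (df - dg).
Proof. intros; apply (is_derive_minus f g x df dg); auto. Qed.
Lemma D_const (a x : R) : is_derive (fun _ => a) x 0.
Proof. apply (is_derive_const a x). Qed.
Lemma D_id (x : R) : is_derive (fun t => t) x 1.
Proof. apply (is_derive_id x). Qed.
Lemma D_exp (f : R -> R) (x df : R) : is_derive f x df -> is_derive (fun t => exp (f t)) x (df * exp (f x)).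
Proof. intros. apply (is_derive_comp exp f x (exp (f x)) df); auto. apply is_derive_exp. Qed.
Lemma D_scal k f x df : is_derive f x df -> is_derive (fun t => k * f t) x (k * df).
Proof. apply is_derive_scal. Qed.

Lemma C_mult (f g : R -> R) (x : R) : continuous f x -> continuous g x -> continuous (fun t => f t * g t) x.
Proof. intros; apply (continuous_mult f g x); auto. Qed.
Lemma C_plus (f g : R -> R) (x : R) : continuous f x -> continuous g x -> continuous (fun t => f t + g t) x.
Proof. intros; apply (continuous_plus f g x); auto. Qed.
Lemma C_minus (f g : R -> R) (x : R) : continuous f x -> continuous g x -> continuous (fun t => f t - g t) x.
Proof. intros; apply (continuous_minus f g x); auto. Qed.
Lemma C_const (a x : R) : continuous (fun _ => a) x.
Proof. apply (continuous_const a x). Qed.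
Lemma C_id (x : R) : continuous (fun t => t) x.
Proof. apply (continuous_id x). Qed.
Lemma C_exp (f : R -> R) (x : R) : continuous f x -> continuous (fun t => exp (f t)) x.
Proof. intros. apply (continuous_comp (U:=R_UniformSpace) (V:=R_UniformSpace) (W:=R_UniformSpace) f exp x); auto. apply (ex_derive_continuous (K:=R_AbsRing) (V:=R_NormedModule)).
  eexists; apply is_derive_exp. Qed.

Lemma D_sumR n (F F' : nat -> R -> R) x :
  (forall k, (k < n)%nat -> is_derive (F k) x (F' k x)) ->
  is_derive (fun t => sumR n (fun k => F k t)) x (sumR n (fun k => F' k x)).
Proof.
  unfold sumR. intros H. assert (H' : forall k, In k (seq 0 n) -> is_derive (F k) x (F' k x)).
  { intros k Hk. apply in_seq in Hk. apply H. lia. }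
  clear H. induction (seq 0 n) as [|a l IH]; simpl.
  - apply D_const.
  - apply D_plus. apply H'; simpl; auto. apply IH. intros; apply H'; simpl; auto.
Qed.
Lemma C_sumR n (F : nat -> R -> R) x :
  (forall k, (k < n)%nat -> continuous (F k) x) ->
  continuous (fun t => sumR n (fun k => F k t)) x.
Proof.
  unfold sumR. intros H. assert (H' : forall k, In k (seq 0 n) -> continuous (F k) x).
  { intros k Hk. apply in_seq in Hk. apply H. lia. }
  clear H. induction (seq 0 n) as [|a l IH]; simpl.
  - apply C_const.
  - apply C_plus. apply H'; simpl; auto. apply IH. intros; apply H'; simpl; auto.
Qed.
Lemma sumR_const n (d : nat -> nat) (f : nat -> R) a :
  (forall k, (k < n)%nat -> f k = INR (d k) * a) -> sumR n f = INR (sumN n d) * a.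
Proof.
  unfold sumR, sumN. intros H. assert (H' : forall k, In k (seq 0 n) -> f k = INR (d k) * a).
  { intros k Hk. apply in_seq in Hk. apply H. lia. }
  clear H. induction (seq 0 n) as [|b l IH]; simpl.
  - ring.
  - rewrite plus_INR, H' by (simpl; auto). rewrite IH by (intros; apply H'; simpl; auto). ring.
Qed.
Lemma sumR_ext n f g : (forall k, (k < n)%nat -> f k = g k) -> sumR n f = sumR n g.
Proof.
  unfold sumR. intros H. assert (H' : forall k, In k (seq 0 n) -> f k = g k).
  { intros k Hk. apply in_seq in Hk. apply H. lia. }
  clear H. induction (seq 0 n) as [|b l IH]; simpl; auto.
  rewrite H' by (simpl; auto). rewrite IH by (intros; apply H'; simpl; auto). auto.
Qed.
Theorem lemma4p2 (n : nat) (d : nat -> nat)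
  (hd : forall i, (i < n)%nat -> (0 < d i)%nat)
  (hsum : (2 <= sumN n d)%nat)
  (p1 p2 : R)
  (hp : (exists s, 0 <= s <= 1 /\ p1 = s /\ p2 = 0) \/
        (exists s, 0 < s <= 1 /\ p1 = 1 /\ p2 = s)) :
  is_solution n d p1 p2 0 (fun _ _ => 0) /\
  (forall (lam : R) (y : nat -> R -> R),
     is_solution n d p1 p2 lam y ->
     lam = 0 /\ (forall i r, (i < n)%nat -> I01 r -> y i r = 0)).
Proof.
  assert (Hsp : 0 <= p2 /\ p2 * p1 = p2).
  { destruct hp as [[s [Hs [-> ->]]]|[s [Hs [-> ->]]]]; (split; [lra|ring]). }
  split.
  { exists (fun _ _ => 0), (fun _ _ => 0). split; [|split; [|split]].
    - intros i Hi. split; [|split].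
      + intros x Hx. apply filterlim_ext with (f := fun _ => 0).
        * intros; unfold Rdiv; ring.
        * apply filterlim_const.
      + intros x Hx. apply filterlim_ext with (f := fun _ => 0).
        * intros; unfold Rdiv; ring.
        * apply filterlim_const.
      + intros x Hx. apply filterlim_const.
    - rewrite (sumR_const n d _ 0) by (intros; ring). ring.
    - intros; ring.
    - intros; split; reflexivity. }
  intros lam y [y1 [y2 [HC [Hfirst [Hode Hbc]]]]].
  destruct Hsp as [Hs0 Hsp1].
  set (s := p2) in *.
  assert (Hn : (0 < n)%nat) by (destruct n; [unfold sumN in hsum; simpl in hsum; lia | lia]).
  assert (Dy : forall k x, (k < n)%nat -> 0 < x < 1 -> is_derive (ext (y k)) x (y1 k x)).
  { intros k x Hk Hx. apply (ext_deriv _ _ (proj1 (HC k Hk))); auto. }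
  assert (Dv : forall k x, (k < n)%nat -> 0 < x < 1 -> is_derive (ext (y1 k)) x (y2 k x)).
  { intros k x Hk Hx. apply (ext_deriv _ _ (proj1 (proj2 (HC k Hk)))); auto. }
  assert (Cy : forall k x, (k < n)%nat -> continuous (ext (y k)) x).
  { intros k x Hk. apply (ext_cont _ _ (proj1 (HC k Hk))). }
  assert (Cv : forall k x, (k < n)%nat -> continuous (ext (y1 k)) x).
  { intros k x Hk. apply (ext_cont _ _ (proj1 (proj2 (HC k Hk)))). }
  set (S := fun t => sumR n (fun k => INR (d k) * ext (y k) t)).
  set (S1 := fun t => sumR n (fun k => INR (d k) * y1 k t)).
  assert (DS : forall x, 0 < x < 1 -> is_derive S x (S1 x)).
  { intros x Hx. apply (D_sumR n (fun k t => INR (d k) * ext (y k) t) (fun k t => INR (d k) * y1 k t)).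
    intros k Hk. apply D_scal. auto. }
  assert (CS : forall x, continuous S x).
  { intros x. apply (C_sumR n (fun k t => INR (d k) * ext (y k) t)).
    intros k Hk. apply C_mult. apply C_const. auto. }
  set (E := fun t => exp (s * S t)).
  assert (DE : forall x, 0 < x < 1 -> is_derive E x (s * S1 x * E x)).
  { intros x Hx. eapply D_eq. apply D_exp. apply D_scal. apply DS; auto. unfold E; ring. }
  assert (CE : forall x, continuous E x).
  { intros x. apply C_exp. apply C_mult. apply C_const. apply CS. }
  assert (Hode' : forall i x, (i < n)%nat -> I01 x -> y2 i x = - s * y1 i x * S1 x - s * lam).
  { intros i x Hi Hx. pose proof (Hode i x Hi Hx). unfold S1. lra. }
  assert (H01 : forall x, 0 < x < 1 -> I01 x) by (unfold I01; intros; lra).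
  assert (Hstep : forall i, (i < n)%nat -> forall t, I01 t -> y i t = y 0%nat t /\ y1 i t = y1 0%nat t).
  { intros i Hi.
    set (W := fun t => (ext (y1 i) t - ext (y1 0%nat) t) * E t).
    assert (HW : forall t, I01 t -> W t = W 0).
    { apply const01.
      - intros x. apply C_mult; [apply C_minus; auto|apply CE].
      - intros x Hx. eapply D_eq. apply D_mult. apply D_minus; apply Dv; auto. apply DE; auto.
        unfold ext. rewrite clamp_id by auto.
        rewrite (Hode' i x), (Hode' 0%nat x) by auto. ring. }
    set (U := fun t => ext (y i) t - ext (y 0%nat) t).
    destruct (mvt01 U (fun t => ext (y1 i) t - ext (y1 0%nat) t)) as [c0 [Hc0 Hmvt]].
    - intros x. apply C_minus; auto.
    - intros x Hx. eapply D_eq. apply D_minus; apply Dy; auto. unfold ext; rewrite clamp_id; auto.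
    - unfold U, ext in Hmvt. rewrite !clamp_id in Hmvt by (unfold I01; lra).
      rewrite (proj1 (Hbc i Hi)), (proj2 (Hbc i Hi)), (proj1 (Hbc 0%nat Hn)), (proj2 (Hbc 0%nat Hn)) in Hmvt.
      assert (HW0 : W 0 = 0).
      { rewrite <- (HW c0 Hc0). unfold W, ext. rewrite <- Hmvt. ring. }
      assert (Hv : forall t, I01 t -> y1 i t = y1 0%nat t).
      { intros t Ht. pose proof (HW t Ht) as H. rewrite HW0 in H. unfold W, ext in H.
        rewrite clamp_id in H by auto.
        apply Rmult_integral in H. destruct H as [H|H]; [lra|].
        unfold E in H. pose proof (exp_pos (s * S t)). lra. }
      assert (HU : forall t, I01 t -> U t = U 0).
      { apply const01.
        - intros x. apply C_minus; auto.
        - intros x Hx. eapply D_eq. apply D_minus; apply Dy; auto. rewrite Hv; auto. ring. }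
      intros t Ht. split; [|apply Hv; auto].
      pose proof (HU t Ht) as H. unfold U, ext in H. rewrite !clamp_id in H by (unfold I01; lra || auto).
      rewrite (proj1 (Hbc i Hi)), (proj1 (Hbc 0%nat Hn)) in H. lra. }
  set (D := INR (sumN n d)).
  set (c := y1 0%nat 0).
  assert (HD : 2 <= D).
  { apply le_INR in hsum. replace (INR 2) with 2 in hsum by (simpl; ring). exact hsum. }
  assert (HS1 : forall t, I01 t -> S1 t = D * y1 0%nat t).
  { intros t Ht. unfold S1. apply sumR_const. intros k Hk. rewrite (proj2 (Hstep k Hk t Ht)). ring. }
  assert (H0I : I01 0) by (unfold I01; lra).
  assert (Hlam : lam = - p1 * D * c ^ 2).
  { rewrite (sumR_const n d (fun k => INR (d k) * y1 k 0) c) in Hfirst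
      by (intros k Hk; rewrite (proj2 (Hstep k Hk 0 H0I)); reflexivity).
    rewrite (sumR_const n d _ (- c * (D * c) + c ^ 2)) in Hfirst
      by (intros k Hk; rewrite (proj2 (Hstep k Hk 0 H0I)); reflexivity).
    fold D in Hfirst.
    apply Rmult_eq_reg_l with (D - 1); [|lra].
    rewrite <- Hfirst. ring. }
  assert (HsL : s * lam = - s * D * c ^ 2).
  { rewrite Hlam. replace (s * (- p1 * D * c ^ 2)) with (- (s * p1) * D * c ^ 2) by ring.
    rewrite Hsp1. ring. }
  set (F := fun t => (ext (y1 0%nat) t - c) * exp (s * D * (ext (y 0%nat) t + c * t))).
  assert (HF : forall t, I01 t -> F t = F 0).
  { apply const01.
    - intros x. apply C_mult. apply C_minus; auto. apply C_const.
      apply C_exp. apply C_mult. apply C_const. apply C_plus; auto.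
      apply C_mult. apply C_const. apply C_id.
    - intros x Hx. eapply D_eq. apply D_mult. apply D_minus. apply Dv; auto. apply D_const.
      apply D_exp. apply D_scal. apply D_plus. apply Dy; auto. apply D_scal. apply D_id.
      unfold ext. rewrite clamp_id by auto.
      rewrite (Hode' 0%nat x), HS1 by auto.
      replace (s * lam) with (- s * D * c ^ 2) by (rewrite HsL; ring). ring. }
  assert (HF0 : F 0 = 0).
  { unfold F, ext. rewrite clamp_id by auto. fold c. ring. }
  assert (Hvc : forall t, I01 t -> y1 0%nat t = c).
  { intros t Ht. pose proof (HF t Ht) as H. rewrite HF0 in H. unfold F, ext in H.
    rewrite clamp_id in H by auto.
    apply Rmult_integral in H. destruct H as [H|H]; [lra|].
    pose proof (exp_pos (s * D * (y 0%nat t + c * t))). lra. }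
  set (Hf := fun t => ext (y 0%nat) t - c * t).
  assert (HHf : forall t, I01 t -> Hf t = Hf 0).
  { apply const01.
    - intros x. apply C_minus; auto. apply C_mult. apply C_const. apply C_id.
    - intros x Hx. eapply D_eq. apply D_minus. apply Dy; auto. apply D_scal. apply D_id.
      rewrite Hvc by auto. ring. }
  assert (H1I : I01 1) by (unfold I01; lra).
  assert (Hc0 : c = 0).
  { pose proof (HHf 1 H1I) as H. unfold Hf, ext in H. rewrite !clamp_id in H by auto.
    rewrite (proj1 (Hbc 0%nat Hn)), (proj2 (Hbc 0%nat Hn)) in H. lra. }
  split.
  - rewrite Hlam, Hc0. ring.
  - intros i r Hi Hr. rewrite (proj1 (Hstep i Hi r Hr)).
    pose proof (HHf r Hr) as H. unfold Hf, ext in H. rewrite !clamp_id in H by auto.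
    rewrite (proj1 (Hbc 0%nat Hn)), Hc0 in H. lra.
Qed.
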